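(* Let $p$ be a prime, let $e\geq2$ and $d\geq2$ be integers, let $\lambda\in\{1,\dots,\min(e,d-1)\}$, and let $\alpha=(\alpha_1,\dots,\alpha_d)\in\mathcal R_\lambda(d,e)$ with $\mu=\mu(\alpha)$. Let $\mathcal P(p^e,d)\subset\mathbb R^d$ be the convex hull of all $d$-dimensional vector-factorisations of $p^e$. Then the inequality $$\sum_{i=1}^dp^{\alpha_i} x_i\geq\lambda p^{\mu+1}+(d-\lambda)p^\mu$$ holds with equality on every element of the set $$S_\alpha=\Big\{(p^{\mu-\alpha_1+\epsilon_1},\dots,p^{\mu-\alpha_d+\epsilon_d})\ :\ (\epsilon_1,\dots,\epsilon_d)\in\{0,1\}^d,\ \textstyle\sum_i\epsilon_i=\lambda\Big\},$$ which is a set of vertices of $\mathcal P(p^e,d)$. The convex hull of $S_\alpha$ is a facet of $\mathcal P(p^e,d)$ which is affinely equivalent to the $(d-1)$-dimensional hypersimplex $\Delta(\lambda)$.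
   Context: $\mathbb N=\{0,1,2,\dots\}$. A $d$-dimensional vector-factorisation of $N\geq1$ is a vector $(v_1,\dots,v_d)\in\mathbb N^d$ with $v_1\cdots v_d=N$. $\mathcal R_\lambda(d,e)$ is the set of all $\alpha\in\mathbb N^d$ with $\min(\alpha_1,\dots,\alpha_d)=0$, $\max(\alpha_1,\dots,\alpha_d)\,d<e+\sum_i\alpha_i$ and $e+\sum_i\alpha_i\equiv\lambda\pmod d$; for such $\alpha$, $\mu(\alpha)$ is the integer with $\mu(\alpha)d+\lambda=e+\sum_i\alpha_i$. $\Delta(\lambda)=\mathrm{Conv}\{\epsilon\in\{0,1\}^d:\sum_i\epsilon_i=\lambda\}$ is the hypersimplex of parameter $\lambda$. *)

(* Defs.v *)
From HB Require Import structures.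
From mathcomp Require Import all_boot all_order all_algebra.
From mathcomp Require Import reals.
Unset Printing Implicit Defensive.
Import Order.TTheory GRing.Theory Num.Theory.
Local Open Scope ring_scope.

Section Defs.
Variable R : realType.
Variable d : nat.

Definition pset := 'rV[R]_d -> Prop.

Definition dotv (c x : 'rV[R]_d) : R := \sum_(i < d) c 0 i * x 0 i.

Definition conv (S : pset) : pset := fun x =>
  exists n (w : 'I_n -> R) (q : 'I_n -> 'rV[R]_d),
    (forall i, S (q i)) /\ (forall i, 0 <= w i) /\
    \sum_(i < n) w i = 1 /\ x = \sum_(i < n) w i *: q i.

Definition aff_indep k (pts : 'I_k.+1 -> 'rV[R]_d) : Prop :=
  \rank (\matrix_(i < k) (pts (lift ord0 i) - pts ord0)) = k.

Definition affdim (S : pset) (k : nat) : Prop :=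
  (exists pts : 'I_k.+1 -> 'rV[R]_d, (forall i, S (pts i)) /\ aff_indep k pts) /\
  (forall pts : 'I_k.+2 -> 'rV[R]_d, (forall i, S (pts i)) -> ~ aff_indep k.+1 pts).

Definition is_face (P F : pset) : Prop :=
  exists (c : 'rV[R]_d) (b : R),
    (forall x, P x -> b <= dotv c x) /\
    (forall x, F x <-> (P x /\ dotv c x = b)).

Definition is_vertex (P : pset) (v : 'rV[R]_d) : Prop :=
  is_face P (fun x => x = v).

Definition is_facet (P F : pset) : Prop :=
  is_face P F /\ exists k, affdim P k.+1 /\ affdim F k.

Definition aff_equiv (A B : pset) : Prop :=
  exists (M : 'M[R]_d) (t : 'rV[R]_d), M \in unitmx /\
    forall x, A x <-> B (x *m M + t).

Definition factorisations (N : nat) : pset := fun x =>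
  exists v : 'I_d -> nat, \prod_(i < d) v i = N /\ x = \row_i (v i)%:R.

Definition factPolytope (N : nat) : pset := conv (factorisations N).

Definition hypersimplex (lam : nat) : pset :=
  conv (fun x => exists eps : 'I_d -> bool,
          \sum_(i < d) (eps i : nat) = lam /\ x = \row_i (eps i)%:R).

End Defs.

Definition in_Rset (lam d e : nat) (alpha : 'I_d -> nat) : Prop :=
  (exists i, alpha i = 0%N) /\
  ((\max_(i < d) alpha i) * d < e + \sum_(i < d) alpha i)%N /\
  (e + \sum_(i < d) alpha i = lam %[mod d])%N.

(* mu(alpha): mu * d + lambda = e + sum alpha *)
Definition mu_of (lam d e : nat) (alpha : 'I_d -> nat) : nat :=
  ((e + \sum_(i < d) alpha i - lam) %/ d)%N.

Definition S_alpha (R : realType) (p d mu lam : nat) (alpha : 'I_d -> nat)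
  : pset R d := fun x =>
  exists eps : 'I_d -> bool, \sum_(i < d) (eps i : nat) = lam /\
    x = \row_i ((p%:R : R) ^ ((mu%:Z - (alpha i)%:Z + (eps i : nat)%:Z)%R)).

(* Main.v *)
Require Import Defs.
From HB Require Import structures.
From mathcomp Require Import all_boot all_order all_algebra.
From mathcomp Require Import reals.
From mathcomp Require Import ring lra zify.
Import Order.TTheory GRing.Theory Num.Theory.
Local Open Scope ring_scope.

Section Aux.
Variable R : realType.

Lemma bern (P : R) (k : nat) : 1 <= P ->
  1 + k%:R * (P - 1) + (k.-1)%:R * (P - 1) ^+ 2 <= P ^+ k.
Proof.
move=> P1; elim: k => [|k IH]; first by rewrite /= !mul0r !addr0 expr0.
case: k IH => [|k] IH.
  by rewrite /= mul0r addr0 mul1r expr1; lra.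
rewrite exprS.
have Q0 : 0 <= P - 1 by lra.
have h1 : 0 <= (k.+1.-1)%:R * (P-1)^+2 by apply: mulr_ge0; [exact: ler0n|exact: sqr_ge0].
apply: le_trans (_ : P * (1 + k.+1%:R * (P - 1) + (k.+1.-1)%:R * (P - 1) ^+ 2) <= _); last first.
  by apply: ler_wpM2l => //; lra.
rewrite /= -!natr1 !mulrDl !mul1r.
set K := k%:R.
have K0 : 0 <= K by rewrite ler0n.
have : 0 <= K * (P - 1)^+2 * (P-1) by apply: mulr_ge0 => //; apply: mulr_ge0 => //; rewrite exprn_ge0.
rewrite /= !expr2 => H. nra.
Qed.

Definition gap (P : R) (m b : nat) :=
  P ^+ b + m%:R * (P - 1) * P ^+ m - P ^+ m - b%:R * (P - 1) * P ^+ m.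

Lemma gap_ge0 (P : R) m b : 2 <= P -> 0 <= gap P m b /\ (gap P m b = 0 <-> (b = m \/ b = m.+1)).
Proof.
move=> P2; have P1 : 1 <= P by lra.
have Pm0 : 0 < P ^+ m by apply: exprn_gt0; lra.
case: (leqP m b) => hmb.
- have [k ->] : exists k, b = (m + k)%N by exists (b - m)%N; rewrite subnKC.
  have hb := @bern P k P1.
  have eq1 : gap P m (m + k) = P ^+ m * (P ^+ k - 1 - k%:R * (P - 1)).
    by rewrite /gap exprD natrD; ring.
  rewrite eq1.
  have Q2 : 0 <= (k.-1)%:R * (P - 1) ^+ 2 by apply: mulr_ge0; [exact: ler0n|exact: sqr_ge0].
  split; first (apply: mulr_ge0; [lra|]; lra).
  split.
  + move/eqP; rewrite mulf_eq0 gt_eqF //= => /eqP h.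
    case: k hb h Q2 {eq1} => [|[|k]] hb h Q2; [by left; rewrite addn0|by right; rewrite addn1|].
    exfalso.
    have : 1 <= (k.+2.-1)%:R * (P - 1) ^+ 2.
      rewrite /= expr2. have : 1 <= (k.+1)%:R :> R by rewrite ler1n.
      move=> h2; have h3 : 1 <= (P-1)*(P-1) by nra. nra.
    lra.
  + case=> h.
    * have -> : k = 0%N by lia.
      by rewrite expr0 mul0r; lra.
    * have -> : k = 1%N by lia.
      by rewrite expr1 mul1r; lra.
- have [k ->] : exists k, m = (b + k.+1)%N by exists (m - b.+1)%N; lia.
  have Pb : 0 < P ^+ b by apply: exprn_gt0; lra.
  set M := P ^+ (b + k.+1).
  have M0 : 0 < M by apply: exprn_gt0; lra.
  have eq1 : gap P (b + k.+1) b = P ^+ b + (k.+1)%:R * (P - 1) * M - M.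
    rewrite /gap -/M natrD; clearbody M; ring.
  have hk : 1 <= (k.+1)%:R :> R by rewrite ler1n.
  have h1 : M <= (k.+1)%:R * (P - 1) * M.
    rewrite -[X in X <= _]mul1r; apply: ler_wpM2r; first lra.
    nra.
  rewrite eq1; split; first lra.
  split; first by move=> H; exfalso; lra.
  by case=> H; exfalso; clear -H; lia.
Qed.

Lemma master (P : R) (d : nat) (n : 'I_d -> nat) (m r : nat) :
  (r <= d)%N -> (\sum_i n i = m * d + r)%N ->
  \sum_i P ^+ (n i) - (r%:R * P ^+ m.+1 + (d - r)%:R * P ^+ m) = \sum_i gap P m (n i).
Proof.
move=> rd hs.
rewrite /gap !sumrB big_split /= !sumr_const card_ord -mulr_suml -mulr_suml -natr_sum hs.
rewrite natrD natrM natrB // exprS -(mulr_natr (_ * _ * _) d) -(mulr_natr (P ^+ m) d); ring.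
Qed.

Lemma master_ge (P : R) (d : nat) (n : 'I_d -> nat) (m r : nat) : 2 <= P ->
  (r <= d)%N -> (\sum_i n i = m * d + r)%N ->
  r%:R * P ^+ m.+1 + (d - r)%:R * P ^+ m <= \sum_i P ^+ (n i) /\
  (\sum_i P ^+ (n i) = r%:R * P ^+ m.+1 + (d - r)%:R * P ^+ m <->
    forall i, n i = m \/ n i = m.+1).
Proof.
move=> P2 rd hs; have E := @master P d n m r rd hs.
have G0 : forall i, 0 <= gap P m (n i) by move=> i; case: (gap_ge0 P m (n i) P2).
split.
  by rewrite -subr_ge0 E; apply: sumr_ge0 => i _.
split.
- move=> H i; have : \sum_i gap P m (n i) = 0 by rewrite -E H subrr.
  move/(psumr_eq0P (fun i _ => G0 i)) => /(_ i isT) h.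
  by case: (gap_ge0 P m (n i) P2) => _ [/(_ h)].
- move=> H; apply/eqP; rewrite -subr_eq0 E; apply/eqP.
  by apply: big1 => i _; case: (gap_ge0 P m (n i) P2) => _ [_ /(_ (H i))].
Qed.

Lemma fact_exp (p e d : nat) (q : 'rV[R]_d) : prime p ->
  factorisations R d (p ^ e) q ->
  exists a : 'I_d -> nat, (\sum_i a i = e)%N /\ q = \row_i ((p%:R : R) ^+ a i).
Proof.
move=> pp [v [Hv ->]].
have hv : forall i, v i = (p ^ logn p (v i))%N.
  move=> i; have : (v i %| p ^ e)%N by rewrite -Hv (bigD1 i) //= dvdn_mulr.
  by case/(dvdn_pfactor _ _ pp) => m _ ->; rewrite pfactorK.
exists (fun i => logn p (v i)); split.
  apply: (expnI (prime_gt1 pp)); rewrite -Hv expn_sum.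
  by apply: eq_bigr => i _; rewrite -hv.
by apply/rowP => i; rewrite !mxE {1}hv natrX.
Qed.

Lemma exp_fact (p e d : nat) (a : 'I_d -> nat) :
  (\sum_i a i = e)%N -> factorisations R d (p ^ e) (\row_i ((p%:R : R) ^+ a i)).
Proof.
move=> ha; exists (fun i => p ^ a i)%N; split.
  by rewrite -ha expn_sum.
by apply/rowP => i; rewrite !mxE natrX.
Qed.

Lemma dot_lin d (c : 'rV[R]_d) n (w : 'I_n -> R) (q : 'I_n -> 'rV[R]_d) :
  dotv R d c (\sum_(i < n) w i *: q i) = \sum_(i < n) w i * dotv R d c (q i).
Proof.
rewrite /dotv.
under eq_bigr => j _ do rewrite summxE mulr_sumr.
rewrite exchange_big /=; apply: eq_bigr => i _; rewrite mulr_sumr.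
by apply: eq_bigr => j _; rewrite mxE mulrCA.
Qed.

Lemma conv_mono d (A B : pset R d) : (forall q, A q -> B q) ->
  forall x, conv R d A x -> conv R d B x.
Proof.
move=> AB x [n [w [q [Hq [Hw [Hs ->]]]]]].
by exists n, w, q; split => // i; apply: AB.
Qed.

Lemma conv_pt d (A : pset R d) q : A q -> conv R d A q.
Proof.
move=> Aq; exists 1%N, (fun _ => 1), (fun _ => q); split; first by []. split; first by move=> _; exact: ler01. split; first by rewrite big_ord1.
by rewrite big_ord1 scale1r.
Qed.

Lemma conv_face d (G Q : pset R d) (c : 'rV[R]_d) (b : R) :
  (forall q, G q -> b <= dotv R d c q) ->
  (forall q, G q -> dotv R d c q = b -> Q q) ->
  (forall q, Q q -> G q /\ dotv R d c q = b) ->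
  (exists q0, Q q0) ->
  (forall x, conv R d G x -> b <= dotv R d c x) /\
  (forall x, conv R d Q x <-> conv R d G x /\ dotv R d c x = b).
Proof.
move=> Hge Heq HQ [q0 Hq0].
have lin : forall n (w : 'I_n -> R) (q : 'I_n -> 'rV[R]_d),
    \sum_i w i = 1 -> dotv R d c (\sum_i w i *: q i) - b =
                     \sum_i w i * (dotv R d c (q i) - b).
  move=> n w q Hs; rewrite dot_lin -{1}[b]mul1r -Hs mulr_suml -sumrB.
  by apply: eq_bigr => i _; rewrite mulrBr.
split.
  move=> x [n [w [q [Hq [Hw [Hs ->]]]]]]; rewrite -subr_ge0 lin //.
  by apply: sumr_ge0 => i _; apply: mulr_ge0 => //; rewrite subr_ge0; apply: Hge.
move=> x; split.
  move=> Cx; split; first by apply: conv_mono Cx => q /HQ [].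
  case: Cx => n [w [q [Hq [Hw [Hs ->]]]]]; apply/eqP; rewrite -subr_eq0 lin //.
  by apply/eqP; apply: big1 => i _; rewrite (proj2 (HQ _ (Hq i))) subrr mulr0.
case=> [[n [w [q [Hq [Hw [Hs ->]]]]]]] Hd.
have Z : \sum_i w i * (dotv R d c (q i) - b) = 0 by rewrite -lin // Hd subrr.
have T : forall i, 0 <= w i * (dotv R d c (q i) - b).
  by move=> i; apply: mulr_ge0 => //; rewrite subr_ge0; apply: Hge.
have Z' := psumr_eq0P (fun i _ => T i) Z.
exists n, w, (fun i => if w i == 0 then q0 else q i); split.
  move=> i; case: eqP => // /eqP wn0; apply: Heq => //.
  have /eqP := Z' i isT; rewrite mulf_eq0 (negbTE wn0) /= subr_eq0 => /eqP //.
split => //; split => //.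
apply: eq_bigr => i _; case: eqP => // ->; by rewrite !scale0r.
Qed.
End Aux.

Arguments fact_exp {R p e d q}.
Arguments exp_fact {R p e d a}.
Arguments master_ge {R P d n m r}.
Arguments conv_face {R d G Q c b}.
Arguments conv_mono {R d A B}.
Arguments conv_pt {R d A q}.
Arguments gap_ge0 {R P}.

Lemma mu_facts (lam d e : nat) (alpha : 'I_d -> nat) :
  (lam < d)%N -> in_Rset lam d e alpha ->
  (mu_of lam d e alpha * d + lam = e + \sum_i alpha i)%N /\
  forall i, (alpha i <= mu_of lam d e alpha)%N.
Proof.
move=> ld [_ [Hmax Hmod]].
have d0 : (0 < d)%N by lia.
set T := (e + \sum_i alpha i)%N in Hmax Hmod *.
have HT : T = (T %/ d * d + lam)%N.
  by rewrite {1}(divn_eq T d) Hmod modn_small.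
have Hmu : mu_of lam d e alpha = (T %/ d)%N.
  by rewrite /mu_of -/T {1}HT addnK mulnK.
rewrite Hmu; split; first by rewrite -HT.
move=> i; have h1 : (alpha i <= \max_i alpha i)%N := leq_bigmax i.
have h2 : ((\max_i alpha i) * d < (T %/ d).+1 * d)%N.
  apply: (leq_trans Hmax); rewrite {1}HT mulSn; lia.
rewrite ltn_pmul2r // in h2; lia.
Qed.

Lemma sum_lt (d lam : nat) : (lam <= d)%N -> (\sum_(k < d) ((k < lam)%N : nat))%N = lam.
Proof.
move=> ld; rewrite -big_mkcond /= -(big_ord_widen _ (fun _ => 1%N) ld).
by rewrite sum1_card card_ord.
Qed.

Lemma expz_nat (R : realType) (P : R) (mu a b : nat) : (a <= mu)%N ->
  P ^ (mu%:Z - a%:Z + b%:Z) = P ^+ (mu - a + b)%N.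
Proof. by move=> h; rewrite subzn // -PoszD. Qed.

Definition sE (R : realType) (p d mu : nat) (alpha : 'I_d -> nat) (eps : 'I_d -> bool)
  : 'rV[R]_d := \row_k ((p%:R : R) ^+ (mu - alpha k + eps k)%N).

Lemma S_char (R : realType) p d mu lam (alpha : 'I_d -> nat) x :
  (forall i, alpha i <= mu)%N ->
  S_alpha R p d mu lam alpha x <-> exists eps : 'I_d -> bool, (\sum_i (eps i : nat))%N = lam /\ x = sE R p d mu alpha eps.
Proof.
move=> Ha; split; case=> eps [h1 h2]; exists eps; split => //; rewrite h2;
  by apply/rowP => k; rewrite !mxE expz_nat.
Qed.

Lemma sum_sE (p e d mu lam : nat) (alpha : 'I_d -> nat) (eps : 'I_d -> bool) :
  (mu * d + lam = e + \sum_i alpha i)%N -> (forall i, alpha i <= mu)%N ->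
  (\sum_i (eps i : nat))%N = lam -> (\sum_i (mu - alpha i + eps i) = e)%N.
Proof.
move=> Hmu Ha He.
have : (\sum_i (mu - alpha i + eps i) + \sum_i alpha i = mu * d + lam)%N.
  rewrite -big_split /=.
  rewrite (eq_bigr (fun i => mu + eps i)%N); last by move=> i _; have := Ha i; lia.
  by rewrite big_split /= He sum_nat_const card_ord mulnC.
lia.
Qed.

Arguments sum_sE p {e d mu lam alpha eps}.

Lemma sum_sE2 (d mu lam : nat) (alpha : 'I_d -> nat) (eps : 'I_d -> bool) :
  (forall i, alpha i <= mu)%N ->
  (\sum_i (eps i : nat))%N = lam -> (\sum_i (alpha i + (mu - alpha i + eps i)) = mu * d + lam)%N.
Proof.
move=> Ha He.
rewrite (eq_bigr (fun i => mu + eps i)%N); last by move=> i _; have := Ha i; lia.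
by rewrite big_split /= He sum_nat_const card_ord mulnC.
Qed.
Arguments sum_sE2 {d mu lam alpha eps}.

Lemma dot_exp (R : realType) (P : R) d (k a : 'I_d -> nat) :
  dotv R d (\row_i (P ^+ k i)) (\row_i (P ^+ a i)) = \sum_i P ^+ (k i + a i).
Proof. by apply: eq_bigr => i _; rewrite !mxE exprD. Qed.

Lemma Sface (R : realType) (p e d mu lam : nat) (alpha : 'I_d -> nat) :
  prime p -> (lam <= d)%N ->
  (mu * d + lam = e + \sum_i alpha i)%N -> (forall i, alpha i <= mu)%N ->
  let c := \row_i ((p%:R : R) ^+ alpha i) in
  let b := lam%:R * (p%:R : R) ^+ mu.+1 + (d - lam)%:R * (p%:R : R) ^+ mu in
  let Q := fun x => exists eps : 'I_d -> bool, (\sum_i (eps i : nat))%N = lam /\ x = sE R p d mu alpha eps in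
  (forall x, conv R d (factorisations R d (p ^ e)) x -> b <= dotv R d c x) /\
  (forall x, conv R d Q x <-> conv R d (factorisations R d (p ^ e)) x /\ dotv R d c x = b).
Proof.
move=> pp ld Hmu Ha c b Q.
have P2 : 2 <= (p%:R : R) by rewrite ler_nat prime_gt1.
apply: conv_face.
- move=> q /(fact_exp pp) [a [ha ->]].
  rewrite /c dot_exp.
  have hs : (\sum_i (alpha i + a i) = mu * d + lam)%N by rewrite big_split /= ha Hmu addnC.
  by case: (master_ge P2 ld hs).
- move=> q /(fact_exp pp) [a [ha ->]].
  rewrite /c dot_exp => Heq.
  have hs : (\sum_i (alpha i + a i) = mu * d + lam)%N by rewrite big_split /= ha Hmu addnC.
  have [_ [H _]] := master_ge P2 ld hs.
  have Hi := H Heq.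
  exists (fun i => alpha i + a i == mu.+1)%N; split.
    have : (\sum_i (alpha i + a i) = \sum_i (mu + (alpha i + a i == mu.+1 : nat)))%N.
      by apply: eq_bigr => i _; case: (Hi i) => ->; rewrite ?eqxx ?addn1 // (_ : (mu == mu.+1) = false) //; lia.
    rewrite [in X in _ = X -> _]big_split /= sum_nat_const card_ord hs mulnC; lia.
  apply/rowP => i; rewrite !mxE; congr (_ ^+ _).
  case: (Hi i) => h; rewrite h.
    rewrite eqn_leq [(mu.+1 <= mu)%N]ltnn andbF addn0; move: h; clear; lia.
  rewrite eqxx /=. move: h (Ha i); clear; lia.
- move=> q [eps [he ->]]; split.
    by apply: exp_fact; apply: (sum_sE p Hmu Ha he).
  rewrite /c dot_exp.
  have hs : (\sum_i (alpha i + (mu - alpha i + eps i)) = mu * d + lam)%N.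
    exact: sum_sE2 Ha he.
  have [_ [_ H]] := master_ge P2 ld hs.
  by apply: H => i; have := Ha i; case: (eps i) => /=; lia.
- exists (sE R p d mu alpha (fun k => (k < lam)%N)); exists (fun k => (k < lam)%N); split => //.
  exact: sum_lt.
Qed.

Lemma conv_single (R : realType) d (s x : 'rV[R]_d) :
  conv R d (fun y => y = s) x <-> x = s.
Proof.
split; last by move=> ->; apply: conv_pt.
case=> n [w [q [Hq [Hw [Hs ->]]]]].
rewrite (eq_bigr (fun i => w i *: s)); last by move=> i _; rewrite Hq.
by rewrite -scaler_suml Hs scale1r.
Qed.

Lemma sum_negb d (eps : 'I_d -> bool) :
  (\sum_i (eps i : nat) + \sum_i (~~ eps i : nat) = d)%N.
Proof.
rewrite -big_split /= (eq_bigr (fun _ => 1%N)); last by move=> i _; case: (eps i).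
by rewrite sum_nat_const card_ord muln1.
Qed.

Lemma sumS d (n : 'I_d -> nat) : (\sum_i (n i).+1 = \sum_i n i + d)%N.
Proof.
rewrite (eq_bigr (fun i => n i + 1)%N); last by move=> i _; rewrite addn1.
by rewrite big_split /= sum_nat_const card_ord muln1.
Qed.

Lemma sum_add d (f g : 'I_d -> nat) :
  (\sum_i (f i + g i) = \sum_i f i + \sum_i g i)%N.
Proof. exact: big_split. Qed.

Lemma Svert (R : realType) (p e d mu lam : nat) (alpha : 'I_d -> nat) (eps : 'I_d -> bool) :
  prime p -> (lam <= d)%N ->
  (mu * d + lam = e + \sum_i alpha i)%N -> (forall i, alpha i <= mu)%N ->
  (\sum_i (eps i : nat))%N = lam ->
  is_vertex R d (conv R d (factorisations R d (p ^ e))) (sE R p d mu alpha eps).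
Proof.
move=> pp ld Hmu Ha He.
set P := (p%:R : R).
have P2 : 2 <= P by rewrite ler_nat prime_gt1.
set k := fun i => (alpha i + ~~ eps i)%N.
set c := \row_i (P ^+ k i * (1 + P)).
set b1 := d%:R * P ^+ mu.+1 + (d - d)%:R * P ^+ mu.
set b2 := 0%:R * P ^+ mu.+3 + (d - 0)%:R * P ^+ mu.+2.
have dotc : forall a : 'I_d -> nat, dotv R d c (\row_i (P ^+ a i)) =
    \sum_i P ^+ (k i + a i) + \sum_i P ^+ (k i + a i).+1.
  move=> a; rewrite -big_split; apply: eq_bigr => i _ /=.
  rewrite !mxE exprS !exprD; ring.
have Hsk : forall a : 'I_d -> nat, (\sum_i a i = e)%N ->
    (\sum_i (k i + a i) = mu * d + d)%N.
  move=> a ha; rewrite sum_add ha /k sum_add.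
  have := sum_negb _ eps; rewrite He; move: Hmu; clear; lia.
have Hsk2 : forall a : 'I_d -> nat, (\sum_i a i = e)%N ->
    (\sum_i (k i + a i).+1 = mu.+2 * d + 0)%N.
  by move=> a ha; rewrite sumS Hsk //; lia.
have dd : (d <= d)%N by [].
have d0 : (0 <= d)%N by [].
have := @conv_face R d (factorisations R d (p ^ e)) (fun y => y = sE R p d mu alpha eps) c (b1 + b2).
case.
- move=> q /(fact_exp pp) [a [ha ->]]; rewrite dotc.
  have [h1 _] := master_ge P2 dd (Hsk a ha).
  have [h2 _] := master_ge P2 d0 (Hsk2 a ha).
  exact: lerD.
- move=> q /(fact_exp pp) [a [ha ->]]; rewrite dotc => Heq.
  have [h1 [e1 _]] := master_ge P2 dd (Hsk a ha).
  have [h2 [e2 _]] := master_ge P2 d0 (Hsk2 a ha).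
  move: Heq; rewrite /b1 /b2 => Heq.
  have E1 : \sum_i P ^+ (k i + a i) = b1 by rewrite /b1; lra.
  have E2 : \sum_i P ^+ (k i + a i).+1 = b2 by rewrite /b2; lra.
  have F1 := e1 E1; have F2 := e2 E2.
  apply/rowP => i; rewrite !mxE; congr (_ ^+ _).
  have := F1 i; have := F2 i; have := Ha i; rewrite /k.
  by case: (eps i) => /=; move: (a i) (alpha i); clear; lia.
- move=> q ->; split.
    exact: exp_fact (sum_sE p Hmu Ha He).
  have ea : forall i, (k i + (mu - alpha i + eps i))%N = mu.+1.
    by move=> i; rewrite /k; have := Ha i; case: (eps i) => /=; move: (alpha i); clear; lia.
  rewrite /sE dotc.
  have hs1 := Hsk _ (sum_sE p Hmu Ha He).
  have hs2 := Hsk2 _ (sum_sE p Hmu Ha He).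
  have [_ [_ e1]] := master_ge P2 dd hs1.
  have [_ [_ e2]] := master_ge P2 d0 hs2.
  rewrite e1; last by move=> i; right; apply: ea.
  rewrite e2 //; last by move=> i; left; rewrite ea.
- by exists (sE R p d mu alpha eps).
move=> Hge Hiff; exists c, (b1 + b2); split => // x.
by rewrite -Hiff conv_single.
Qed.

Lemma conv_aff (R : realType) d (A B : pset R d) (M : 'M[R]_d) (t : 'rV[R]_d) x :
  (forall q, A q -> B (q *m M + t)) -> conv R d A x -> conv R d B (x *m M + t).
Proof.
move=> AB [n [w [q [Hq [Hw [Hs ->]]]]]].
exists n, w, (fun i => q i *m M + t); split; first by move=> i; apply: AB.
split => //; split => //.
rewrite mulmx_suml -{1}[t]scale1r -Hs scaler_suml -big_split /=.
by apply: eq_bigr => i _; rewrite scalerDr scalemxAl.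
Qed.

Lemma diag_unit (R : realType) d (v : 'rV[R]_d) : (forall k, v 0 k != 0) ->
  diag_mx v \in unitmx.
Proof.
move=> hv; rewrite unitmxE det_diag unitfE; apply/prodf_neq0 => k _; exact: hv.
Qed.

Lemma aff_part (R : realType) (p d mu lam : nat) (alpha : 'I_d -> nat) :
  prime p -> (forall i, alpha i <= mu)%N ->
  aff_equiv R d
    (conv R d (fun x => exists eps : 'I_d -> bool, (\sum_i (eps i : nat))%N = lam /\ x = sE R p d mu alpha eps))
    (hypersimplex R d lam).
Proof.
move=> pp Ha.
set P := (p%:R : R).
have P2 : 2 <= P by rewrite ler_nat prime_gt1.
set g := fun k => P ^+ (mu - alpha k).
set h := fun k => g k * (P - 1).
have g0 : forall k, g k != 0 by move=> k; rewrite expf_neq0 //; apply/eqP => H; rewrite H in P2; lra.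
have h0 : forall k, h k != 0 by move=> k; rewrite mulf_neq0 //; apply/eqP => H; lra.
set M := diag_mx (\row_k (h k)^-1).
set t := \row_k (- (g k / h k)).
set M' := diag_mx (\row_k (h k)).
set t' := \row_k (g k).
exists M, t; split.
  by apply: diag_unit => k; rewrite mxE invr_eq0.
have back : forall x, (x *m M + t) *m M' + t' = x.
  move=> x; apply/rowP => k; rewrite /M /M' !mul_mx_diag !mxE.
  by field; apply: h0.
move=> x; split.
  apply: conv_aff => q [eps [he ->]]; exists eps; split => //.
  apply/rowP => k; rewrite /M !mul_mx_diag !mxE /sE ?mxE exprD.
  have Pm1 : (p%:R - 1 : R) != 0 by apply/eqP => H; move: P2; rewrite /P; move: H; clear; lra.
  have gk : (p%:R : R) ^+ (mu - alpha k) != 0 by apply: g0.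
  rewrite /h /g /P; case: (eps k) => /=; rewrite ?expr1 ?expr0; field; by rewrite ?Pm1 ?gk.
move=> H; rewrite -(back x); move: H; apply: conv_aff => q [eps [he ->]].
exists eps; split => //.
apply/rowP => k; rewrite /M' !mul_mx_diag !mxE /sE ?mxE exprD.
by rewrite /h /g; case: (eps k) => /=; rewrite ?expr1 ?expr0; ring.
Qed.

Lemma tri_unit (R : realType) n (C : 'M[R]_n) :
  (forall i j : 'I_n, (j < i)%N -> C i j = 0) -> (forall i, C i i != 0) -> C \in unitmx.
Proof.
move=> Hl Hd; rewrite -unitmx_tr unitmxE det_trig.
  by rewrite unitfE; apply/prodf_neq0 => i _; rewrite mxE.
by apply/is_trig_mxP => i j ij; rewrite mxE Hl.
Qed.

Lemma rank_from (R : realType) k n (A : 'M[R]_(k, n)) (B : 'M[R]_(n, k)) :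
  (A *m B) \in unitmx -> \rank A = k.
Proof.
move=> U; apply/eqP; rewrite eqn_leq rank_leq_row /=.
by rewrite -{1}(mxrank_unit U) mxrankM_maxl.
Qed.

Lemma sum2 (R : realType) d (f : 'I_d -> R) i j : i != j ->
  (forall k, k != i -> k != j -> f k = 0) -> \sum_k f k = f i + f j.
Proof.
move=> ij H; rewrite (bigD1 i) //= (bigD1 j) //=; last by rewrite eq_sym.
rewrite big1 ?addr0 // => k /andP [ki kj]; exact: H.
Qed.

Lemma aff_ub (R : realType) d k (pts : 'I_k.+1 -> 'rV[R]_d) : (d < k)%N -> ~ aff_indep R d k pts.
Proof. by rewrite /aff_indep => dk H; have := rank_leq_col (\matrix_(i < k) (pts (lift ord0 i) - pts ord0)); rewrite H; lia. Qed.

Lemma dot_sub (R : realType) d (c x y : 'rV[R]_d) : dotv R d c (x - y) = dotv R d c x - dotv R d c y.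
Proof. by rewrite /dotv -sumrB; apply: eq_bigr => i _; rewrite !mxE mulrBr. Qed.

Lemma aff_ub_hyper (R : realType) d (c : 'rV[R]_d) b (pts : 'I_d.+1 -> 'rV[R]_d) :
  c != 0 -> (forall i, dotv R d c (pts i) = b) -> ~ aff_indep R d d pts.
Proof.
move=> c0 Hd; rewrite /aff_indep.
set A := \matrix_(i < d) (pts (lift ord0 i) - pts ord0).
have AB : A *m c^T = 0.
  apply/matrixP => i j; rewrite !mxE (ord1 j).
  apply: (@trans_eq _ _ (dotv R d c (pts (lift ord0 i) - pts ord0))); last by rewrite dot_sub !Hd subrr.
  by apply: eq_bigr => k _; rewrite !mxE mulrC.
have := mulmx0_rank_max AB; rewrite mxrank_tr => H1 H2.
have : \rank c != 0%N by rewrite mxrank_eq0.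
lia.
Qed.

Lemma mulB_col0 (R : realType) n (A : 'M[R]_(n.+2)) i :
  (A *m \matrix_(k, j) (if j == ord0 then 1 else (k == j)%:R)) i ord0 = \sum_k A i k.
Proof. by rewrite !mxE; apply: eq_bigr => k _; rewrite !mxE eqxx mulr1. Qed.

Lemma mulB_colj (R : realType) n (A : 'M[R]_(n.+2)) i j : j != ord0 ->
  (A *m \matrix_(k, j) (if j == ord0 then 1 else (k == j)%:R)) i j = A i j.
Proof.
move=> j0; rewrite !mxE (bigD1 j) //= !mxE (negbTE j0) eqxx mulr1 big1 ?addr0 //.
by move=> k kj; rewrite !mxE (negbTE j0) (negbTE kj) mulr0.
Qed.

Lemma P_lower (R : realType) (p e n : nat) : prime p -> (2 <= e)%N ->
  exists pts : 'I_(n.+3) -> 'rV[R]_(n.+2),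
    (forall i, conv R _ (factorisations R _ (p ^ e)) (pts i)) /\ aff_indep R n.+2 n.+2 pts.
Proof.
move=> pp e2.
set P := (p%:R : R).
have P2 : 2 <= P by rewrite ler_nat prime_gt1.
set exv := fun f : 'I_(n.+2) -> nat => \row_k (P ^+ f k).
set i1 : 'I_(n.+2) := lift ord0 ord0.
have i10 : i1 != ord0 by [].
set ex0 := fun k : 'I_(n.+2) => if k == ord0 then e else 0%N.
set exj := fun (j k : 'I_(n.+2)) => if k == j then e else 0%N.
set exM := fun k : 'I_(n.+2) => if k == ord0 then e.-1 else if k == i1 then 1%N else 0%N.
set rex := fun i : 'I_(n.+2) => if i == ord0 then exM else exj i.
set pts := fun i : 'I_(n.+3) => if unlift ord0 i is Some j then exv (rex j) else exv ex0.
have pts0 : pts ord0 = exv ex0 by rewrite /pts unlift_none.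
have ptsl : forall j, pts (lift ord0 j) = exv (rex j) by move=> j; rewrite /pts liftK.
have sumj : forall j, (\sum_k exj j k = e)%N.
  move=> j; rewrite (bigD1 j) //= /exj eqxx big1 ?addn0 // => k kj.
  by rewrite (negbTE kj).
exists pts; split.
  move=> i; apply: conv_pt; rewrite /pts; case: (unlift ord0 i) => [j|].
    rewrite /rex; case: eqP => _; apply: exp_fact => //.
    rewrite (bigD1 ord0) //= (bigD1 i1) //= big1 ?addn0 /exM /=; first by lia.
    by move=> k /andP [k0 k1]; rewrite /exM (negbTE k0) (negbTE k1).
  by apply: exp_fact; apply: sumj.
rewrite /aff_indep.
apply: (@rank_from R _ _ _ (\matrix_(k, j) (if j == ord0 then 1 else (k == j)%:R))).
have [m em] : exists m, e = m.+2 by exists (e - 2)%N; lia.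
have Pm : 1 <= P ^+ m by apply: exprn_ege1; lra.
have Aent : forall i k, (\matrix_(i < n.+2) (pts (lift ord0 i) - pts ord0)) i k =
    P ^+ (rex i k) - P ^+ (ex0 k).
  by move=> i k; rewrite !mxE ptsl pts0 !mxE.
apply: tri_unit.
- move=> i j ji.
  have i0 : i != ord0 by apply/eqP => h; rewrite h in ji.
  case: (eqVneq j ord0) => [->|j0].
    rewrite mulB_col0 (@sum2 R _ _ _ _ i0).
      rewrite !Aent /rex (negbTE i0) /exj /ex0 eqxx (negbTE i0) eq_sym (negbTE i0).
      by rewrite expr0; ring.
    move=> k ki k0; rewrite Aent /rex (negbTE i0) /exj /ex0 (negbTE ki) (negbTE k0).
    by rewrite subrr.
  rewrite mulB_colj // Aent /rex (negbTE i0) /exj /ex0 (negbTE j0).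
  have ji' : j != i by apply/eqP => h; rewrite h ltnn in ji.
  by rewrite (negbTE ji') subrr.
- move=> i; case: (eqVneq i ord0) => [->|i0].
    rewrite mulB_col0 (@sum2 R _ _ ord0 i1 (negbT (esym (negbTE i10)))).
      rewrite !Aent /rex eqxx /exM /ex0 eqxx (negbTE i10) eqxx em /= !exprS expr0.
      apply/eqP => h.
      have h2 : P * (P * P ^+ m) - P * P ^+ m = P - 1 by lra.
      have : (P - 1) * (P * P ^+ m - 1) = 0.
        have E : (P - 1) * (P * P ^+ m - 1) = (P * (P * P ^+ m) - P * P ^+ m) - (P - 1) by ring.
        by rewrite E h2 subrr.
      move/eqP; rewrite mulf_eq0 => /orP [] /eqP H; first lra.
      have : P <= P * P ^+ m by rewrite -{1}[P]mulr1; apply: ler_wpM2l; lra.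
      lra.
    move=> k k0 k1; rewrite Aent /rex eqxx /exM /ex0 (negbTE k0) (negbTE k1).
    by rewrite subrr.
  rewrite mulB_colj // Aent /rex (negbTE i0) /exj /ex0 eqxx (negbTE i0) em expr0.
  apply/eqP => h.
  have h3 : 1 <= P * P ^+ m by nra.
  have : P <= P * (P * P ^+ m) by nra.
  rewrite !exprS in h.
  lra.
Qed.

Definition swp d (eps : 'I_d -> bool) (b a : 'I_d) : 'I_d -> bool :=
  fun k => if k == a then true else if k == b then false else eps k.
Arguments swp {d}.

Lemma sum2n d (f : 'I_d -> nat) a b : a != b ->
  (\sum_k f k = f a + f b + \sum_(k | (k != a) && (k != b)) f k)%N.
Proof.
move=> ab; rewrite (bigD1 a) //= (bigD1 b) //=; last by rewrite eq_sym.
by rewrite addnA.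
Qed.

Lemma swp_sum d (eps : 'I_d -> bool) b a : eps b -> ~~ eps a ->
  (\sum_k (swp eps b a k : nat) = \sum_k (eps k : nat))%N.
Proof.
move=> eb ea.
have ab : a != b by apply/eqP => h; rewrite h eb in ea.
have ba : b != a by rewrite eq_sym.
rewrite (@sum2n _ _ _ _ ab) (@sum2n _ (fun k => (eps k : nat)) _ _ ab) /swp eqxx (negbTE ba) eqxx.
rewrite (negbTE ea) eb; congr (_ + _)%N.
by apply: eq_bigr => k /andP [ka kb]; rewrite (negbTE ka) (negbTE kb).
Qed.

Lemma mulSel (R : realType) n k (A : 'M[R]_(k, n.+2)) (l0 : 'I_(n.+2)) i j :
  (A *m \matrix_(x, y) ((x == lift l0 y)%:R)) i j = A i (lift l0 j).
Proof.
rewrite !mxE (bigD1 (lift l0 j)) //= !mxE eqxx mulr1 big1 ?addr0 //.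
by move=> x xj; rewrite !mxE (negbTE xj) mulr0.
Qed.

Lemma F_lower (R : realType) (p n mu lam : nat) (alpha : 'I_(n.+2) -> nat) :
  prime p -> (1 <= lam)%N -> (lam <= n.+1)%N ->
  exists pts : 'I_(n.+2) -> 'rV[R]_(n.+2),
    (forall i, exists eps : 'I_(n.+2) -> bool,
        (\sum_k (eps k : nat))%N = lam /\ pts i = sE R p _ mu alpha eps) /\
    aff_indep R n.+2 n.+1 pts.
Proof.
move=> pp l1 ln.
set P := (p%:R : R).
have P2 : 2 <= P by rewrite ler_nat prime_gt1.
set L0 : 'I_(n.+2) := inord lam.-1.
set L1 : 'I_(n.+2) := inord lam.
have vL0 : nat_of_ord L0 = lam.-1 by rewrite /L0 inordK //; lia.
have vL1 : nat_of_ord L1 = lam by rewrite /L1 inordK //; lia.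
set eps0 := fun k : 'I_(n.+2) => (k < lam)%N.
set bi := fun i : 'I_(n.+1) => if (i < lam.-1)%N then widen_ord (leqnSn _) i else L0.
set ai := fun i : 'I_(n.+1) => if (i < lam.-1)%N then L1 else lift ord0 i.
have vbi : forall i, nat_of_ord (bi i) = if (i < lam.-1)%N then nat_of_ord i else lam.-1.
  by move=> i; rewrite /bi; case: ifP.
have vai : forall i, nat_of_ord (ai i) = if (i < lam.-1)%N then lam else (nat_of_ord i).+1.
  by move=> i; rewrite /ai; case: ifP.
have eb : forall i, eps0 (bi i).
  by move=> i; rewrite /eps0 vbi; case: ifP; lia.
have ea : forall i, ~~ eps0 (ai i).
  by move=> i; rewrite /eps0 vai; case: ifP; lia.
set pts := fun j : 'I_(n.+2) => if unlift ord0 j is Some i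
  then sE R p _ mu alpha (swp eps0 (bi i) (ai i)) else sE R p _ mu alpha eps0.
have pts0 : pts ord0 = sE R p _ mu alpha eps0 by rewrite /pts unlift_none.
have ptsl : forall i, pts (lift ord0 i) = sE R p _ mu alpha (swp eps0 (bi i) (ai i)).
  by move=> i; rewrite /pts liftK.
have s0 : (\sum_k (eps0 k : nat))%N = lam by apply: sum_lt; lia.
exists pts; split.
  move=> j; rewrite /pts; case: (unlift ord0 j) => [i|]; last by exists eps0.
  by exists (swp eps0 (bi i) (ai i)); split => //; rewrite swp_sum.
rewrite /aff_indep.
apply: (@rank_from R _ _ _ (\matrix_(x, y) ((x == lift L0 y)%:R))).
have Aent : forall i k, (\matrix_(i < n.+1) (pts (lift ord0 i) - pts ord0)) i k =
    P ^+ (mu - alpha k + swp eps0 (bi i) (ai i) k) - P ^+ (mu - alpha k + eps0 k).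
  by move=> i k; rewrite !mxE ptsl pts0 !mxE.
have Z : forall i k, nat_of_ord k != nat_of_ord (ai i) -> nat_of_ord k != nat_of_ord (bi i) ->
    (\matrix_(i < n.+1) (pts (lift ord0 i) - pts ord0)) i k = 0.
  move=> i k ka kb; rewrite Aent /swp.
  have -> : (k == ai i) = false by apply/negbTE; apply: contra ka => /eqP ->.
  have -> : (k == bi i) = false by apply/negbTE; apply: contra kb => /eqP ->.
  by rewrite subrr.
have NZ : forall i k, (nat_of_ord k == nat_of_ord (ai i)) || (nat_of_ord k == nat_of_ord (bi i)) ->
    (\matrix_(i < n.+1) (pts (lift ord0 i) - pts ord0)) i k != 0.
  move=> i k hk; rewrite Aent /swp.
  have ab : ai i != bi i by apply/eqP => h; have := eb i; rewrite -h (negbTE (ea i)).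
  set g := P ^+ (mu - alpha k).
  have g0 : g != 0 by rewrite expf_neq0 //; apply/eqP => H; rewrite H in P2; move: P2; clear; lra.
  have Pm1 : P - 1 != 0 by apply/eqP => H; move: P2 H; clear; lra.
  have P0 : P != 0 by apply/eqP => H; move: P2 H; clear; lra.
  have key1 : forall x, P * P ^+ x - P ^+ x != 0.
    move=> x; rewrite -{2}[P ^+ x]mul1r -mulrBl mulf_neq0 // expf_neq0 //.
  have key2 : forall x, P ^+ x - P * P ^+ x != 0.
    move=> x; rewrite -{1}[P ^+ x]mul1r -mulrBl mulf_neq0 // ?expf_neq0 //.
    by apply/eqP => H; move: P2 H; clear; lra.
  case/orP: hk => /eqP hk.
    have -> : k = ai i by apply: ord_inj.
    rewrite eqxx (negbTE (ea i)) addn0 addn1 exprS -/g.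
    exact: key1.
  have -> : k = bi i by apply: ord_inj.
  have ba : bi i != ai i by rewrite eq_sym.
  rewrite (negbTE ba) eqxx (eb i) /= addn0 addn1 exprS.
  exact: key2.
apply: tri_unit.
- move=> [i hi] [j hj0] /= ji; rewrite mulSel; apply: Z; rewrite /= /bump ?vai ?vbi vL0 /=; case: ifP => h; case: (leqP lam.-1 j) => hj /=; lia.
- move=> [i hi]; rewrite mulSel; apply: NZ; rewrite /= /bump ?vai ?vbi vL0 /=; case: ifP => h; case: (leqP lam.-1 i) => hj /=; apply/orP; lia.
Qed.

Theorem corollary3p4 (R : realType) (p e d lam : nat) (alpha : 'I_d -> nat) :
  prime p -> (2 <= e)%N -> (2 <= d)%N -> (1 <= lam)%N -> (lam <= minn e d.-1)%N ->
  in_Rset lam d e alpha ->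
  let mu := mu_of lam d e alpha in
  let P := factPolytope R d (p ^ e) in
  let S := S_alpha R p d mu lam alpha in
  (forall x, P x ->
     lam%:R * (p%:R ^+ mu.+1) + (d - lam)%N%:R * (p%:R ^+ mu)
       <= \sum_(i < d) (p%:R ^+ alpha i) * x 0 i) /\
  (forall x, S x ->
     \sum_(i < d) (p%:R ^+ alpha i) * x 0 i
       = lam%:R * (p%:R ^+ mu.+1) + (d - lam)%N%:R * (p%:R ^+ mu)) /\
  (forall x, S x -> is_vertex R d P x) /\
  is_facet R d P (conv R d S) /\
  aff_equiv R d (conv R d S) (hypersimplex R d lam).
Proof.
move=> pp e2; case: d alpha => [|[|n]] alpha d2 // l1 lmin HR mu P S.
have ld : (lam < n.+2)%N by move: lmin; rewrite leq_min => /andP [_ h]; lia.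
have [Hmu Ha] := @mu_facts lam _ e alpha ld HR.
rewrite -/mu in Hmu Ha.
have ld' : (lam <= n.+2)%N by lia.
have := @Sface R p e _ mu lam alpha pp ld' Hmu Ha => /= [[F1 F2]].
set Q := fun x => exists eps : 'I_(n.+2) -> bool,
  (\sum_i (eps i : nat))%N = lam /\ x = sE R p _ mu alpha eps.
have SQ : forall x, S x <-> Q x by move=> x; exact: (@S_char R p _ mu lam alpha x Ha).
have cSQ : forall x, conv R _ S x <-> conv R _ Q x.
  by move=> x; split; apply: conv_mono => q /SQ.
set c := \row_i ((p%:R : R) ^+ alpha i).
have dotE : forall x, dotv R _ c x = \sum_i (p%:R ^+ alpha i) * x 0 i.
  by move=> x; apply: eq_bigr => i _; rewrite mxE.
split.
  by move=> x Px; rewrite -dotE; apply: F1.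
split.
  move=> x /SQ Qx; rewrite -dotE.
  by have [_ ->] := (F2 x).1 (conv_pt Qx).
split.
  move=> x /SQ [eps [he ->]]; exact: (@Svert R p e _ mu lam alpha eps pp ld' Hmu Ha he).
split; last first.
  have [M [t [U H]]] := @aff_part R p _ mu lam alpha pp Ha.
  exists M, t; split => // x; rewrite cSQ; exact: H.
split.
  exists c, (lam%:R * (p%:R : R) ^+ mu.+1 + (n.+2 - lam)%:R * (p%:R : R) ^+ mu); split.
    exact: F1.
  by move=> x; rewrite cSQ F2.
exists n.+1; split; split.
- have [pts [H1 H2]] := @P_lower R p e n pp e2.
  by exists pts.
- by move=> pts _; apply: aff_ub.
- have [pts [H1 H2]] := @F_lower R p n mu lam alpha pp l1 (ltnSE ld).
  exists pts; split => // i; rewrite cSQ; apply: conv_pt; exact: H1.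
- move=> pts Hp; apply: (@aff_ub_hyper R _ c (lam%:R * (p%:R : R) ^+ mu.+1 + (n.+2 - lam)%:R * (p%:R : R) ^+ mu)).
    apply/eqP => /matrixP /(_ 0 ord0); rewrite !mxE => /eqP.
    rewrite expf_eq0 pnatr_eq0 => /andP [_ /eqP p0].
    by rewrite p0 in pp.
  by move=> i; have := (F2 (pts i)).1; rewrite -cSQ => /(_ (Hp i)) [].
Qed.
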